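(* The theory $\mathsf{iGL}$ is closed under box-translation: for every modal proposition $A$, if $\mathsf{iGL}\vdash A$ then $\mathsf{iGL}\vdash A^\Box$.
   Context: Modal language: propositional variables, $\bot$, $\wedge,\vee,\to$, $\Box$; atomic = variables and $\bot$. $\mathsf{iGL}$: intuitionistic propositional logic in the modal language plus $\Box(A\to B)\to(\Box A\to\Box B)$, $\Box A\to\Box\Box A$, $\Box(\Box A\to A)\to\Box A$, closed under modus ponens and necessitation. Box-translation: $A^\Box:=A\wedge\Box A$ for atomic $A$; $(A\circ B)^\Box:=A^\Box\circ B^\Box$ for $\circ\in\{\wedge,\vee\}$; $(A\to B)^\Box:=(A^\Box\to B^\Box)\wedge\Box(A^\Box\to B^\Box)$; $(\Box A)^\Box:=\Box(A^\Box)$. *)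

(* Defs.v *)
From Stdlib Require Import Arith.

Inductive form : Type :=
| Var : nat -> form
| Bot : form
| And : form -> form -> form
| Or  : form -> form -> form
| Imp : form -> form -> form
| Box : form -> form.

Inductive iGL : form -> Prop :=
| ax_K   : forall A B, iGL (Imp A (Imp B A))
| ax_S   : forall A B C,
    iGL (Imp (Imp A (Imp B C)) (Imp (Imp A B) (Imp A C)))
| ax_AndI : forall A B, iGL (Imp A (Imp B (And A B)))
| ax_AndE1 : forall A B, iGL (Imp (And A B) A)
| ax_AndE2 : forall A B, iGL (Imp (And A B) B)
| ax_OrI1 : forall A B, iGL (Imp A (Or A B))
| ax_OrI2 : forall A B, iGL (Imp B (Or A B))
| ax_OrE : forall A B C,
    iGL (Imp (Imp A C) (Imp (Imp B C) (Imp (Or A B) C)))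
| ax_EFQ : forall A, iGL (Imp Bot A)
| ax_Kbox : forall A B, iGL (Imp (Box (Imp A B)) (Imp (Box A) (Box B)))
| ax_4 : forall A, iGL (Imp (Box A) (Box (Box A)))
| ax_Lob : forall A, iGL (Imp (Box (Imp (Box A) A)) (Box A))
| rule_MP : forall A B, iGL (Imp A B) -> iGL A -> iGL B
| rule_Nec : forall A, iGL A -> iGL (Box A).

Fixpoint boxtr (A : form) : form :=
  match A with
  | Var p => And (Var p) (Box (Var p))
  | Bot => And Bot (Box Bot)
  | And B C => And (boxtr B) (boxtr C)
  | Or B C => Or (boxtr B) (boxtr C)
  | Imp B C => And (Imp (boxtr B) (boxtr C)) (Box (Imp (boxtr B) (boxtr C)))
  | Box B => Box (boxtr B)
  end.

(* Main.v *)
Require Import Defs.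
From Stdlib Require Import List.
Import ListNotations.

Inductive Der (G : list form) : form -> Prop :=
| Dhyp : forall A, In A G -> Der G A
| Dax : forall A, iGL A -> Der G A
| Dmp : forall A B, Der G (Imp A B) -> Der G A -> Der G B.

Lemma iGL_I : forall A, iGL (Imp A A).
Proof.
  intro A. eapply rule_MP. eapply rule_MP. apply (ax_S A (Imp A A) A).
  apply ax_K. apply (ax_K A A).
Qed.

Lemma deduction : forall G A B, Der (A :: G) B -> Der G (Imp A B).
Proof.
  intros G A B H. induction H.
  - destruct H as [<-|H].
    + apply Dax, iGL_I.
    + eapply Dmp. apply Dax, ax_K. now apply Dhyp.
  - eapply Dmp. apply Dax, ax_K. now apply Dax.
  - eapply Dmp. eapply Dmp. apply Dax, ax_S. exact IHDer1. exact IHDer2.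
Qed.

Lemma der_nil : forall A, Der [] A -> iGL A.
Proof.
  intros A H. induction H.
  - destruct H.
  - assumption.
  - eapply rule_MP; eauto.
Qed.

Lemma mp2 : forall G A B C, iGL (Imp A (Imp B C)) -> Der G A -> Der G B -> Der G C.
Proof. intros. eapply Dmp. eapply Dmp. apply Dax; eassumption. eauto. eauto. Qed.
Lemma mp1 : forall G A B, iGL (Imp A B) -> Der G A -> Der G B.
Proof. intros. eapply Dmp. apply Dax; eassumption. eauto. Qed.

Lemma box_mp : forall G A B, Der G (Box (Imp A B)) -> Der G (Box A) -> Der G (Box B).
Proof. intros. eapply mp2. apply ax_Kbox. eauto. eauto. Qed.

Lemma box_and : forall G A B, Der G (Box A) -> Der G (Box B) -> Der G (Box (And A B)).
Proof.
  intros. eapply box_mp. eapply box_mp. apply Dax, rule_Nec, ax_AndI. eauto. eauto.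
Qed.

Lemma box_map : forall G A B, iGL (Imp A B) -> Der G (Box A) -> Der G (Box B).
Proof. intros. eapply box_mp. apply Dax, rule_Nec; eassumption. eauto. Qed.

Lemma L : forall A G, Der G (boxtr A) -> Der G (Box (boxtr A)).
Proof.
  induction A; intros G H; simpl in *.
  - assert (Der G (Box (Var n))) by (eapply mp1; [apply ax_AndE2|exact H]).
    apply box_and. auto. eapply mp1. apply ax_4. auto.
  - eapply mp1. apply ax_EFQ. eapply mp1. apply ax_AndE1. exact H.
  - apply box_and.
    + apply IHA1. eapply mp1. apply ax_AndE1. exact H.
    + apply IHA2. eapply mp1. apply ax_AndE2. exact H.
  - eapply Dmp. eapply Dmp. eapply Dmp. apply Dax, ax_OrE.
    + apply deduction. eapply box_map. apply ax_OrI1. apply IHA1. apply Dhyp. left; auto.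
    + apply deduction. eapply box_map. apply ax_OrI2. apply IHA2. apply Dhyp. left; auto.
    + exact H.
  - assert (Der G (Box (Imp (boxtr A1) (boxtr A2)))) by (eapply mp1; [apply ax_AndE2|exact H]).
    apply box_and. auto. eapply mp1. apply ax_4. auto.
  - eapply mp1. apply ax_4. exact H.
Qed.

Definition boxed (G : list form) := forall h, In h G -> Der G (Box h).

Lemma boxing : forall G X, Der G X -> forall G', (forall h, In h G -> Der G' (Box h)) -> Der G' (Box X).
Proof.
  intros G X H. induction H; intros G' HG.
  - auto.
  - apply Dax, rule_Nec; auto.
  - eapply box_mp; eauto.
Qed.

Definition trctx (G : list form) := forall h, In h G -> exists A, h = boxtr A.

Lemma trctx_boxed : forall G, trctx G -> forall h, In h G -> Der G (Box h).
Proof.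
  intros G HG h Hh. destruct (HG h Hh) as [A ->]. apply L. now apply Dhyp.
Qed.

Lemma pack : forall G P Q, trctx G -> Der (boxtr P :: G) (boxtr Q) -> Der G (boxtr (Imp P Q)).
Proof.
  intros G P Q HG H. simpl. apply deduction in H.
  eapply mp2. apply ax_AndI. exact H.
  eapply boxing. exact H. apply trctx_boxed; auto.
Qed.

Lemma trctx_cons : forall A G, trctx G -> trctx (boxtr A :: G).
Proof. intros A G HG h [<-|Hh]; eauto. Qed.
Lemma trctx_nil : trctx [].
Proof. intros h []. Qed.

Lemma use_imp : forall G P Q, Der G (boxtr (Imp P Q)) -> Der G (boxtr P) -> Der G (boxtr Q).
Proof. intros. simpl in *. eapply Dmp. eapply mp1. apply ax_AndE1. eauto. eauto. Qed.

Ltac hyp := apply Dhyp; simpl; tauto.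
Ltac tc := repeat (apply trctx_cons); apply trctx_nil.

Theorem proposition4p16 : forall A : form, iGL A -> iGL (boxtr A).
Proof.
  intros A H. induction H.
  - apply der_nil. apply pack. tc. apply pack. tc. hyp.
  - apply der_nil. apply pack. tc. apply pack. tc. apply pack. tc.
    eapply use_imp. eapply use_imp. apply Dhyp; simpl; right; right; left; reflexivity.
    hyp. eapply use_imp. apply Dhyp; simpl; right; left; reflexivity. hyp.
  - apply der_nil. apply pack. tc. apply pack. tc. simpl.
    eapply mp2. apply ax_AndI. hyp. hyp.
  - apply der_nil. apply pack. tc. simpl. eapply mp1. apply ax_AndE1. hyp.
  - apply der_nil. apply pack. tc. simpl. eapply mp1. apply ax_AndE2. hyp.
  - apply der_nil. apply pack. tc. simpl. eapply mp1. apply ax_OrI1. hyp.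
  - apply der_nil. apply pack. tc. simpl. eapply mp1. apply ax_OrI2. hyp.
  - apply der_nil. apply pack. tc. apply pack. tc. apply pack. tc. simpl.
    eapply Dmp. eapply Dmp. eapply Dmp. apply Dax, ax_OrE.
    + eapply mp1. apply ax_AndE1. apply Dhyp; simpl; right; right; left; reflexivity.
    + eapply mp1. apply ax_AndE1. apply Dhyp; simpl; right; left; reflexivity.
    + hyp.
  - apply der_nil. apply pack. tc. simpl. eapply mp1. apply ax_EFQ.
    eapply mp1. apply ax_AndE1. hyp.
  - apply der_nil. apply pack. tc. apply pack. tc. simpl.
    eapply box_mp. eapply box_map. apply ax_AndE1.
    apply Dhyp; simpl; right; left; reflexivity. hyp.
  - apply der_nil. apply pack. tc. simpl. eapply mp1. apply ax_4. hyp.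
  - apply der_nil. apply pack. tc. simpl. eapply mp1. apply ax_Lob.
    eapply box_map. apply ax_AndE1. hyp.
  - simpl in IHiGL1. eapply rule_MP. eapply rule_MP. apply ax_AndE1. exact IHiGL1. exact IHiGL2.
  - simpl. apply rule_Nec. exact IHiGL.
Qed.
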